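(* Let $A,C$ be logically independent events and consider assessments with $P(C|A)=x>0$. Then $(C|A)\wedge\bar C=x\,\bar A\bar C$, and the iterated conditional $\bar A\,|\,\big((C|A)\wedge\bar C\big)$, defined as $\bar A\wedge(C|A)\wedge\bar C+\mu\,(1-(C|A)\wedge\bar C)$ with $\mu$ its prevision, equals $1$ (i.e. its only coherent prevision is $\mu=1$ and it takes value $1$ in every outcome). *)

(* Defs.v *)
From Stdlib Require Import Reals List Bool.
Import ListNotations.
Open Scope R_scope.

Definition indic {W : Type} (E : W -> bool) (w : W) : R := if E w then 1 else 0.
Definition sure {W : Type} : W -> bool := fun _ => true.
Definition ev_not {W : Type} (E : W -> bool) : W -> bool := fun w => negb (E w).

Definition logically_independent {W : Type} (A C : W -> bool) : Prop :=
  (exists w, A w = true /\ C w = true) /\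
  (exists w, A w = true /\ C w = false) /\
  (exists w, A w = false /\ C w = true) /\
  (exists w, A w = false /\ C w = false).

(* Conditional event E|H (consequent, antecedent). An unconditional event E
   is identified with E|Omega, i.e. CEv E sure. *)
Record cevent (W : Type) := CEv { cons_ : W -> bool; cond_ : W -> bool }.
Arguments CEv {W} _ _.
Arguments cons_ {W} _ _.
Arguments cond_ {W} _ _.

(* Gilio–Sanfilippo conjunction of conditional events E_1|H_1 ,..., E_n|H_n:
   value 0 if some E_i|H_i is false (H_i true, E_i false); 1 if all are true;
   otherwise (none false, the set S of void ones nonempty) the prevision
   of the conjunction of the void ones, given here by the assessment
   [p mask] where [mask] marks (by true) the void conditional events. *)
Definition conjunction {W : Type} (es : list (cevent W)) (p : list bool -> R)
  (w : W) : R :=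
  if existsb (fun e => cond_ e w && negb (cons_ e w)) es then 0
  else if forallb (fun e => cond_ e w) es then 1
  else p (map (fun e => negb (cond_ e w)) es).

Definition iter_cond {W : Type} (EQ Q : W -> R) (mu : R) (w : W) : R :=
  EQ w + mu * (1 - Q w).

(* Coherence (betting scheme) of the prevision mu of the iterated conditional:
   for every stake s, the gain s * (X - mu) is not uniformly negative on the
   outcomes where the conditioning quantity Q is not zero (where Q = 0 the
   bet is called off, X = mu there). *)
Definition coherent_iter {W : Type} (EQ Q : W -> R) (mu : R) : Prop :=
  forall s : R, exists w, Q w <> 0 /\ s * (iter_cond EQ Q mu w - mu) >= 0.

(* Main.v *)
Require Import Defs.
From Stdlib Require Import Reals List Bool Lra.
Import ListNotations.
Open Scope R_scope.

Theorem mainTheorem9 (W : Type) (A C : W -> bool) (x : R)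
  (p2 p3 : list bool -> R) :
  logically_independent A C ->
  0 < x -> x <= 1 ->
  (* P(C|A) = x : prevision of the conjunction whose only void member is C|A *)
  p2 [true; false] = x ->
  p3 [false; true; false] = x ->
  let Q := conjunction [CEv C A; CEv (ev_not C) sure] p2 in
  let AQ := conjunction [CEv (ev_not A) sure; CEv C A; CEv (ev_not C) sure] p3 in
  (forall w, Q w = x * indic (fun v => (negb (A v) && negb (C v))%bool) w) /\
  (forall mu, coherent_iter AQ Q mu <-> mu = 1) /\
  (forall w, iter_cond AQ Q 1 w = 1).
Proof.
  intros [_ [_ [_ [w0 [HA0 HC0]]]]] Hx Hx1 H2 H3 Q AQ.
  assert (HQ : forall w, Q w = x * indic (fun v => (negb (A v) && negb (C v))%bool) w).
  { intro w; unfold Q, conjunction, indic, ev_not, sure; simpl.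
    destruct (A w), (C w); simpl; try rewrite H2; lra. }
  assert (HAQ : forall w, AQ w = x * indic (fun v => (negb (A v) && negb (C v))%bool) w).
  { intro w; unfold AQ, conjunction, indic, ev_not, sure; simpl.
    destruct (A w), (C w); simpl; try rewrite H3; lra. }
  split; [exact HQ|split].
  - intro mu; split.
    + intro Hc. destruct (Hc (mu - 1)) as [w [Hq Hs]].
      unfold iter_cond in Hs. rewrite HQ, HAQ in *. unfold indic in *.
      destruct (negb (A w) && negb (C w))%bool.
      * assert (E : (mu - 1) * (x * 1 + mu * (1 - x * 1) - mu) = - x * ((mu-1)*(mu-1))) by ring.
        rewrite E in Hs.
        assert (0 <= (mu-1)*(mu-1)) by apply Rle_0_sqr.
        assert (x * ((mu-1)*(mu-1)) = 0) by nra.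
        assert ((mu-1)*(mu-1) = 0) by (apply (Rmult_eq_reg_l x); lra).
        nra.
      * exfalso; apply Hq; ring.
    + intros -> s. exists w0. unfold iter_cond. rewrite HQ, HAQ. unfold indic.
      rewrite HA0, HC0; simpl. split; [lra|]. ring_simplify. lra.
  - intro w. unfold iter_cond. rewrite HQ, HAQ. unfold indic.
    destruct (negb (A w) && negb (C w))%bool; ring.
Qed.
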